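(* Let $G$ be an $(n,n,p_s,p_d)$-two-island network with groups $V_1,V_2$ and degree of homophily $h_G=p_s/p_d$, and let the dual opinions evolve according to the dynamics in the context with common resilience $\phi\in(0,1)$, common bias $b$ with $\frac{2}{\phi(h_G-1)+2}<b<1$, and the symmetric initial condition $x_i(0)=x_0\in(\tfrac12,1)$, $y_i(0)=y_0\in[\tfrac12,x_0]$ for $i\in V_1$, $x_j(0)=1-x_0$, $y_j(0)=1-y_0$ for $j\in V_2$. Let $i\in V_1$. If there exists $T>0$ such that $\hat x(\phi,h_G,b)\le x_i(t)<\hat x(1,h_G,b)$ for all $t\ge T$, then there exists $\mathcal T>T$ such that $x_i(t)$ and $y_i(t)$ are monotonic for $t\ge\mathcal T$, and $$\lim_{t\to\infty}x_i(t)=\hat x(\phi,h_G,b),\qquad \lim_{t\to\infty}y_i(t)=\frac{\phi(h_G+1)\hat x(\phi,h_G,b)+1-\phi}{\phi h_G+2-\phi}.$$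
   Context: Let $n\ge 1$ and $p_s,p_d\in(0,1)$ with $p_s>p_d$ and $np_s,np_d$ positive integers. An $(n,n,p_s,p_d)$-two-island network is an undirected graph (no self-loops) with vertex set $V=V_1\cup V_2$, $V_1\cap V_2=\emptyset$, $|V_1|=|V_2|=n$, such that each node of $V_1$ has exactly $np_s$ neighbours in $V_1$ and $np_d$ neighbours in $V_2$, and each node of $V_2$ has exactly $np_s$ neighbours in $V_2$ and $np_d$ neighbours in $V_1$. Its degree of homophily is $h_G=p_s/p_d>1$. Let $w_{ij}\in\{0,1\}$ be the adjacency matrix, $N_i$ the set of neighbours of $i$, and $d_i=\sum_{j\in N_i}w_{ij}$. Dual opinions dynamics: each $i\in V$ has $x_i(t),y_i(t)\in[0,1]$, $t=0,1,2,\dots$, updated by $$x_i(t+1)=\frac{x_i(t)^{b}s_i(t)}{x_i(t)^{b}s_i(t)+(1-x_i(t))^{b}(d_i-s_i(t))},\qquad y_i(t+1)=\phi\, x_i(t+1)+(1-\phi)\hat y_{i,avg}(t),$$ with $s_i(t)=\sum_{j\in N_i}w_{ij}y_j(t)$ and $\hat y_{i,avg}(t)=\sum_{j\in N_i}\frac{w_{ij}}{d_i}y_j(t)$. For $0<b<1$ define $g(x,b)=\frac{x^{1-b}-(1-x)^{1-b}}{x(1-x)^{1-b}-(1-x)x^{1-b}}$ for $x\in(\tfrac12,1)$ and $g(\tfrac12,b)=\frac2b-2$. For $\psi\in(0,1]$ with $\frac{2}{\psi(h_G-1)+2}<b<1$, $\hat x(\psi,h_G,b)$ denotes the unique solution $x\in(\tfrac12,1)$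 of $g(x,b)=\psi(h_G-1)$ (in particular $\hat x(1,h_G,b)$ solves $g(x,b)=h_G-1$). *)

(* Defs.v *)
From HB Require Import structures.
From mathcomp Require Import all_boot all_order all_algebra.
From mathcomp Require Import all_classical all_reals all_analysis.
Set Implicit Arguments. Unset Strict Implicit. Unset Printing Implicit Defensive.
Import Order.TTheory GRing.Theory Num.Theory.
Local Open Scope classical_set_scope.
Local Open Scope ring_scope.

Definition two_island (R : realType) (T : finType) (e : rel T) (V1 : {set T})
    (n : nat) (ps pd : R) : Prop :=
  (1 <= n)%N /\ 0 < pd /\ pd < ps /\ ps < 1 /\
      (exists ks : nat, (0 < ks)%N /\ n%:R * ps = ks%:R) /\
      (exists kd : nat, (0 < kd)%N /\ n%:R * pd = kd%:R) /\
      #|V1| = n /\ #|~: V1| = n /\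
      (forall i j, e i j = e j i) /\ (forall i, ~~ e i i) /\
      (forall i, (#|[set j in V1 | e i j]|%:R : R) =
                   (if i \in V1 then n%:R * ps else n%:R * pd)
               /\ (#|[set j in ~: V1 | e i j]|%:R : R) =
                   (if i \in V1 then n%:R * pd else n%:R * ps)).

Definition w (R : realType) (T : finType) (e : rel T) (i j : T) : R := (e i j)%:R.
Definition deg (R : realType) (T : finType) (e : rel T) (i : T) : R :=
  \sum_(j | e i j) w R e i j.

Definition dual_dynamics (R : realType) (T : finType) (e : rel T) (b phi : R)
    (x y : nat -> T -> R) : Prop :=
  forall (t : nat) (i : T),
    let s := \sum_(j | e i j) w R e i j * y t j in
    let yavg := \sum_(j | e i j) (w R e i j / deg R e i) * y t j in
    x t.+1 i = (x t i `^ b * s) /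
               (x t i `^ b * s + (1 - x t i) `^ b * (deg R e i - s))
    /\ y t.+1 i = phi * x t.+1 i + (1 - phi) * yavg.

Definition g (R : realType) (x b : R) : R :=
  if x == 2^-1 then 2 / b - 2
  else (x `^ (1 - b) - (1 - x) `^ (1 - b)) /
       (x * (1 - x) `^ (1 - b) - (1 - x) * x `^ (1 - b)).

Definition xhat (R : realType) (psi h b : R) : R :=
  xget (2^-1 : R) [set x : R | 2^-1 < x < 1 /\ g x b = psi * (h - 1)].

Definition monotone_from (R : realType) (u : nat -> R) (T0 : nat) : Prop :=
  (forall s t, (T0 <= s)%N -> (s <= t)%N -> u s <= u t) \/
  (forall s t, (T0 <= s)%N -> (s <= t)%N -> u t <= u s).

(* Main.v *)
Require Import Defs.
From HB Require Import structures.
From mathcomp Require Import all_boot all_order all_algebra.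
From mathcomp Require Import all_classical all_reals all_analysis.
From mathcomp Require Import ring lra.
Import Order.TTheory GRing.Theory Num.Theory numFieldNormedType.Exports.
Local Open Scope classical_set_scope.
Local Open Scope ring_scope.


Section AnalysisS.
Variable R : realType.
Definition sig_ (k x : R) := 2^-1 + k * (x - 2^-1).
Definition psi (r k x : R) := r * ln x - r * ln (1 - x) - ln (sig_ k x) + ln (1 - sig_ k x).
Definition dpsi (r k x : R) := r / x + r / (1 - x) - k / sig_ k x - k / (1 - sig_ k x).

Lemma der_lin (a c x : R) : is_derive x 1 (fun y : R => a + c * (y - x)) c.
Proof.
have -> : (fun y : R => a + c * (y - x)) = cst a + (c \*: (id - cst x)).
  by apply/funext => y /=.
apply: is_derive_eq.
by rewrite /= add0r subr0; apply: mulr1.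
Qed.

Lemma der_lnlin (a c x : R) : 0 < a -> is_derive x 1 (fun y : R => ln (a + c * (y - x))) (c / a).
Proof.
move=> a0.
have := @is_derive1_comp R (@ln R) (fun y : R => a + c * (y - x)) x (a^-1) c.
rewrite subrr mulr0 addr0 => H.
apply: is_derive_eq; first apply: H.
- exact: is_derive1_ln.
- exact: der_lin.
by rewrite mulrC.
Qed.

Lemma sig_bnd (k x : R) : 0 < k < 1 -> 0 <= x <= 1 -> 0 < sig_ k x < 1.
Proof. move=> /andP[k0 k1] /andP[x0 x1]; rewrite /sig_; apply/andP; split; nra. Qed.

Lemma psi_derive (r k x : R) : 0 < k < 1 -> 0 < x < 1 ->
  is_derive x 1 (psi r k) (dpsi r k x).
Proof.
move=> hk hx.
case/andP: hx => x0 x1; case/andP: hk => k0 k1.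
have hs : 0 < sig_ k x < 1 by apply: sig_bnd; rewrite ?k0 ?k1 ?ltW.
case/andP: hs => s0 s1.
have -> : psi r k = (r \*: (fun y => ln (x + 1 * (y - x))))
   - (r \*: (fun y => ln ((1 - x) + (-1) * (y - x))))
   - (fun y => ln (sig_ k x + k * (y - x)))
   + (fun y => ln ((1 - sig_ k x) + (-k) * (y - x))).
  apply/funext => y; rewrite /psi /sig_ /=; congr (_ * ln _ - _ * ln _ - ln _ + ln _); ring.
apply: is_derive_eq.
  apply: is_deriveD; first apply: is_deriveB; first apply: is_deriveB.
  - apply: is_deriveZ; apply: der_lnlin => //.
  - apply: is_deriveZ; apply: der_lnlin; rewrite subr_gt0 //.
  - apply: der_lnlin => //.
  - apply: der_lnlin; rewrite subr_gt0 //.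
rewrite /dpsi /GRing.scale /=; field. all: rewrite ?lt0r_neq0 ?subr_gt0 //.
Qed.

Lemma psi_cont (r k a b : R) : 0 < k < 1 -> 0 < a -> b < 1 ->
  {within `[a, b], continuous (psi r k)}.
Proof.
move=> hk a0 b1; apply: derivable_within_continuous => x.
rewrite in_itv /= => /andP[ax xb].
apply: ex_derive; apply: psi_derive => //.
apply/andP; split; [exact: lt_le_trans ax|exact: le_lt_trans b1].
Qed.

Lemma psi_MVT (r k a b : R) : 0 < k < 1 -> 0 < a -> a < b -> b < 1 ->
  exists2 c, a < c < b & psi r k b - psi r k a = dpsi r k c * (b - a).
Proof.
move=> hk a0 ab b1.
have [x|c cab H] := @MVT R (psi r k) (dpsi r k) a b ab _ (@psi_cont r k a b hk a0 b1).
  rewrite in_itv /= => /andP[ax xb]; apply: psi_derive => //.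
  apply/andP; split; [exact: lt_trans ax|exact: lt_trans b1].
by exists c => //; move: cab; rewrite in_itv.
Qed.

Definition D0 (r k : R) := (k - r) / (4 * k * (1 - r * k)).

Lemma dpsi_eq (r k x : R) : 0 < k < 1 -> 0 < x < 1 ->
  dpsi r k x = ((r - k) / 4 + (x - 2^-1)^+2 * k * (1 - r * k)) /
               (x * (1 - x) * (sig_ k x * (1 - sig_ k x))).
Proof.
move=> hk hx.
case/andP: hx => x0 x1.
have hs : 0 < sig_ k x < 1 by apply: sig_bnd; rewrite ?hk ?ltW ?x0 ?x1.
case/andP: hs => s0 s1.
rewrite /dpsi; apply/eqP; rewrite -subr_eq0; apply/eqP.
rewrite /sig_ in s0 s1 *.
field. all: rewrite ?lt0r_neq0 ?subr_gt0 ?mulr_gt0 ?subr_gt0 //. all: try lra.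
Qed.


Lemma psi_half (r k : R) : psi r k (2^-1) = 0.
Proof.
have h : 1 - 2^-1 = 2^-1 :> R by field.
by rewrite /psi /sig_ subrr mulr0 addr0 h; ring.
Qed.

Lemma dpsi_neg (r k x : R) : 0 < r -> r < k -> k < 1 -> 2^-1 < x < 1 ->
  (x - 2^-1)^+2 < D0 r k -> dpsi r k x < 0.
Proof.
move=> r0 rk k1 /andP[x0 x1] hd.
have k0 : 0 < k by apply: lt_trans r0 rk.
have x0' : 0 < x by apply: lt_trans x0; rewrite invr_gt0.
rewrite dpsi_eq; last by rewrite x0' x1.
  2: by rewrite k0 k1.
have hs : 0 < sig_ k x < 1 by apply: sig_bnd; rewrite ?k0 ?k1 ?ltW ?x0' ?x1.
case/andP: hs => s0 s1.
rewrite pmulr_llt0; last by rewrite invr_gt0 !mulr_gt0 ?subr_gt0.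
have rk1 : 0 < 1 - r * k by rewrite subr_gt0; nra.
move: hd; rewrite /D0 ltr_pdivlMr; last by rewrite !mulr_gt0.
nra.
Qed.

Lemma psi_unique (r k u v : R) : 0 < r -> r < k -> k < 1 ->
  2^-1 < u < 1 -> 2^-1 < v < 1 -> psi r k u = 0 -> psi r k v = 0 -> u = v.
Proof.
move=> r0 rk k1 hu hv pu pv.
have k0 : 0 < k by apply: lt_trans r0 rk.
have hk : 0 < k < 1 by rewrite k0 k1.
have h0 : (0:R) < 2^-1 by rewrite invr_gt0.
have rk1 : 0 < 1 - r * k by rewrite subr_gt0; nra.
have key : forall c, 2^-1 < c < 1 -> dpsi r k c = 0 -> (c - 2^-1)^+2 * (4 * k * (1 - r * k)) = k - r.
  move=> c /andP[c0 c1]; rewrite dpsi_eq //; last by rewrite c1 (lt_trans h0 c0).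
  have hs : 0 < sig_ k c < 1 by apply: sig_bnd; rewrite ?k0 ?k1 ?ltW ?c1 ?(lt_trans h0 c0).
  case/andP: hs => s0 s1.
  have hden : 0 < c * (1 - c) * (sig_ k c * (1 - sig_ k c)).
    by rewrite !mulr_gt0 ?subr_gt0 ?(lt_trans h0 c0).
  move/eqP; rewrite mulf_eq0 invr_eq0 (gt_eqF hden) orbF => /eqP H; nra.
wlog uv : u v hu hv pu pv / u < v.
  move=> W; case: (ltgtP u v) => [/W|/W|//]; first by apply.
  by move=> H; symmetry; apply: H.
exfalso.
case/andP: hu => u0 u1; case/andP: hv => v0 v1.
have [c1 /andP[c10 c11] H1] := @psi_MVT r k _ _ hk h0 u0 u1.
have [c2 /andP[c20 c21] H2] := @psi_MVT r k _ _ hk (lt_trans h0 u0) uv v1.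
move: H1 H2; rewrite psi_half pu pv subrr => /esym/eqP H1 /esym/eqP H2.
move: H1; rewrite mulf_eq0 => /orP[/eqP H1|]; last by rewrite subr_eq0 (gt_eqF u0).
move: H2; rewrite mulf_eq0 => /orP[/eqP H2|]; last by rewrite subr_eq0 (gt_eqF uv).

have e1 := key c1 _ H1; have e2 := key c2 _ H2.
have hc1 : 2^-1 < c1 < 1 by apply/andP; split=> //; lra.
have hc2 : 2^-1 < c2 < 1 by apply/andP; split=> //; lra.
have := e1 hc1; rewrite -(e2 hc2) => /mulIf.
have hq : 4 * k * (1 - r * k) != 0 by rewrite lt0r_neq0 // !mulr_gt0.
move=> /(_ hq) E.
nra.
Qed.


Lemma psi_exists (r k : R) : 0 < r -> r < k -> k < 1 ->
  exists c, 2^-1 < c < 1 /\ psi r k c = 0.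
Proof.
move=> r0 rk k1.
have k0 : 0 < k by apply: lt_trans r0 rk.
have hk : 0 < k < 1 by rewrite k0 k1.
have h0 : (0:R) < 2^-1 by rewrite invr_gt0.
have rk1 : 0 < 1 - r * k by rewrite subr_gt0; nra.
have d0 : 0 < D0 r k by rewrite /D0 divr_gt0 ?subr_gt0 // !mulr_gt0.
have d1 : D0 r k < 4^-1.
  rewrite /D0 ltr_pdivrMr ?mulr_gt0 //.
  have -> : 4^-1 * (4 * k * (1 - r * k)) = k * (1 - r * k) by field.
  have : 0 < r * (1 - k * k) by apply: mulr_gt0 => //; nra.
  nra.
set p := 2^-1 + D0 r k.
have neg : forall x, 2^-1 < x -> x <= p -> psi r k x < 0.
  move=> x x0 xp.
  have x1 : x < 1 by rewrite /p in xp; lra.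
  have [c /andP[c0 c1] H] := @psi_MVT r k _ _ hk h0 x0 x1.
  rewrite psi_half subr0 in H; rewrite H pmulr_llt0 ?subr_gt0 //.
  apply: dpsi_neg => //; first by rewrite c0 /=; lra.
  have : c - 2^-1 < D0 r k by rewrite /p in xp; lra.
  have : 0 < c - 2^-1 by lra.
  nra.
set m := (1 + k) / (1 - k).
have m1 : 1 < m by rewrite /m ltr_pdivlMr ?subr_gt0 //; lra.
have lm : 0 < ln m by apply: ln_gt0.
set Z := expR (2 * ln m / r).
have Z0 : 0 < Z by apply: expR_gt0.
set q := Z / (1 + Z).
have q0 : 0 < q by apply: divr_gt0 => //; lra.
have q1 : q < 1 by rewrite /q ltr_pdivrMr; lra.
have q1' : 1 - q = 1 / (1 + Z) by rewrite /q; field; lra.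
have pos : 0 < psi r k q.
  have hs : 0 < sig_ k q < 1 by apply: sig_bnd; rewrite ?k0 ?k1 ?ltW ?q0 ?q1.
  case/andP: hs => s0 s1.
  rewrite /psi -mulrBr -ln_div ?posrE ?subr_gt0 //.
  have -> : q / (1 - q) = Z by rewrite q1' /q; field; lra.
  rewrite expRK.
  have -> : r * (2 * ln m / r) = 2 * ln m by field; lra.
  have : ln (sig_ k q) - ln (1 - sig_ k q) <= ln m.
    rewrite -ln_div ?posrE ?subr_gt0 // ler_ln ?posrE ?divr_gt0 ?subr_gt0 //; last by lra.
    rewrite ler_pdivrMr ?subr_gt0 // /m mulrAC ler_pdivlMr ?subr_gt0 //.
    rewrite /sig_; nra.
  lra.
have pq : p < q.
  rewrite ltNge; apply/negP => qp.
  have Z1 : 1 < Z by rewrite /Z expR_gt1 divr_gt0 ?mulr_gt0.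
  have qh : 2^-1 < q by rewrite /q ltr_pdivlMr; lra.
  have := neg q qh qp; lra.
have p0 : 2^-1 < p by rewrite /p; lra.
have np := neg p p0 (lexx p).
have [|c] := @IVT R (psi r k) p q 0 (ltW pq) (@psi_cont r k p q hk (lt_trans h0 p0) q1).
  rewrite /Num.min /Num.max !ifT; last by lra.
  by apply/andP; split; lra.
  by lra.
rewrite in_itv /= => /andP[pc cq] pc0; exists c; split => //.
by apply/andP; split; lra.
Qed.


Lemma g_psi (x b c0 : R) : 0 < b < 1 -> 0 < c0 -> 2^-1 < x < 1 ->
  (g x b = c0 <-> psi (1 - b) (c0 / (c0 + 2)) x = 0).
Proof.
move=> /andP[b0 b1] c00 /andP[xh x1].
have h0 : (0:R) < 2^-1 by rewrite invr_gt0.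
have x0 : 0 < x by apply: lt_trans xh.
have k0 : 0 < c0 / (c0 + 2) by rewrite divr_gt0 //; lra.
have k1 : c0 / (c0 + 2) < 1 by rewrite ltr_pdivrMr; lra.
set k := c0 / (c0 + 2).
have hs : 0 < sig_ k x < 1 by apply: sig_bnd; rewrite ?k0 ?k1 ?ltW ?x0 ?x1.
case/andP: hs => s0 s1.
set A := x `^ (1 - b); set B := (1 - x) `^ (1 - b).
have A0 : 0 < A by apply: powR_gt0.
have B0 : 0 < B by apply: powR_gt0; lra.
have BA : B < A.
  apply: gt0_ltr_powR; rewrite ?subr_gt0 // ?nnegrE; lra.
have Epsi : psi (1 - b) k x = 0 <-> A * (1 - sig_ k x) = B * sig_ k x.
  rewrite /psi -!ln_powR -/A -/B.
  split => H.
    apply: ln_inj; rewrite ?posrE ?mulr_gt0 ?subr_gt0 //.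
    rewrite !lnM ?posrE ?subr_gt0 //; lra.
  have : ln (A * (1 - sig_ k x)) = ln (B * sig_ k x) by rewrite H.
  rewrite !lnM ?posrE ?subr_gt0 //; lra.
have key : (A - B) - c0 * (x * B - (1 - x) * A) =
           (c0 + 2) * (A * (1 - sig_ k x) - B * sig_ k x).
  rewrite /k /sig_; field; lra.
have c02 : c0 + 2 != 0 by apply: lt0r_neq0; lra.
rewrite Epsi /g ifF; last by apply/negbTE; rewrite neq_lt xh orbT.
rewrite -/A -/B.
split => H.
  have den : x * B - (1 - x) * A != 0.
    apply/negP => /eqP d; move: H; rewrite d invr0 mulr0 => H; lra.
  have : (A - B) - c0 * (x * B - (1 - x) * A) = 0.
    by rewrite -H divfK // subrr.
  rewrite key => /eqP; rewrite mulf_eq0 (negbTE c02) /= subr_eq0 => /eqP //.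
have : (A - B) - c0 * (x * B - (1 - x) * A) = 0 by rewrite key H subrr mulr0.
move=> /eqP; rewrite subr_eq0 => /eqP E.
have den : x * B - (1 - x) * A != 0.
  apply/negP => /eqP d; move: E; rewrite d mulr0 => E; lra.
by rewrite E mulfK.
Qed.


Lemma psi_AB (r k x : R) : 0 < k < 1 -> 0 < x < 1 ->
  (psi r k x = 0 <-> x `^ r * (1 - sig_ k x) = (1 - x) `^ r * sig_ k x).
Proof.
move=> hk /andP[x0 x1].
have hs : 0 < sig_ k x < 1 by apply: sig_bnd; rewrite ?hk ?ltW ?x0 ?x1.
case/andP: hs => s0 s1.
have A0 : 0 < x `^ r by apply: powR_gt0.
have B0 : 0 < (1 - x) `^ r by apply: powR_gt0; lra.
rewrite /psi -!ln_powR.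
split => H.
  apply: ln_inj; rewrite ?posrE ?mulr_gt0 ?subr_gt0 //.
  rewrite !lnM ?posrE ?subr_gt0 //; lra.
have : ln (x `^ r * (1 - sig_ k x)) = ln ((1 - x) `^ r * sig_ k x) by rewrite H.
rewrite !lnM ?posrE ?subr_gt0 //; lra.
Qed.

End AnalysisS.
Arguments sig_ {R}. Arguments psi {R}. Arguments dpsi {R}. Arguments D0 {R}.



Section D.
Variable R : realType.

Lemma eventually_mono (p q : nat -> R) :
  (forall t, 0 <= p t -> 0 <= q t.+1 -> 0 <= p t.+1) ->
  (forall t, 0 <= p t -> 0 <= q t -> 0 <= q t.+1) ->
  (forall t, p t <= 0 -> q t.+1 <= 0 -> p t.+1 <= 0) ->
  (forall t, p t <= 0 -> q t <= 0 -> q t.+1 <= 0) ->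
  exists T, ((forall t, (T <= t)%N -> 0 <= p t) \/ (forall t, (T <= t)%N -> p t <= 0)) /\
            ((forall t, (T <= t)%N -> 0 <= q t) \/ (forall t, (T <= t)%N -> q t <= 0)).
Proof.
move=> R1 R2 R3 R4.
case: (pselect (exists T, 0 <= p T /\ 0 <= q T)) => [[T [pT qT]]|nU].
  have H : forall n, 0 <= p (T + n)%N /\ 0 <= q (T + n)%N.
    elim=> [|n [IHp IHq]]; first by rewrite addn0.
    have q1 : 0 <= q (T + n).+1 by apply: R2.
    by rewrite addnS; split => //; apply: R1.
  exists T; split; left => t Tt; rewrite -(subnKC Tt); by case: (H (t - T)%N).
case: (pselect (exists T, p T <= 0 /\ q T <= 0)) => [[T [pT qT]]|nD].
  have H : forall n, p (T + n)%N <= 0 /\ q (T + n)%N <= 0.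
    elim=> [|n [IHp IHq]]; first by rewrite addn0.
    have q1 : q (T + n).+1 <= 0 by apply: R4.
    by rewrite addnS; split => //; apply: R3.
  exists T; split; right => t Tt; rewrite -(subnKC Tt); by case: (H (t - T)%N).
have nU' : forall t, 0 <= p t -> q t < 0.
  by move=> t pt; rewrite ltNge; apply/negP => qt; apply: nU; exists t.
have nD' : forall t, p t <= 0 -> 0 < q t.
  by move=> t pt; rewrite ltNge; apply/negP => qt; apply: nD; exists t.
exists 0%N.
case: (ltgtP (p 0%N) 0) => [p0|p0|p0].
- have H : forall t, p t < 0.
    elim=> // t IH; rewrite ltNge; apply/negP => pt1.
    have qt1 := nU' t.+1 pt1.
    have pt1' : p t.+1 <= 0 by apply: R3; [exact: ltW|exact: ltW].
    have := nD' t.+1 pt1'; lra.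
  split; [right|left] => t _; first exact: ltW.
  exact: ltW (nD' t (ltW (H t))).
- have H : forall t, 0 < p t.
    elim=> // t IH; rewrite ltNge; apply/negP => pt1.
    have qt1 := nD' t.+1 pt1.
    have pt1' : 0 <= p t.+1 by apply: R1; [exact: ltW|exact: ltW].
    have := nU' t.+1 pt1'; lra.
  split; [left|right] => t _; first exact: ltW.
  exact: ltW (nU' t (ltW (H t))).
- have := nU' 0%N (ltac:(lra)); have := nD' 0%N (ltac:(lra)); lra.
Qed.


Definition sF (KS KD Y : R) := KS * Y + KD * (1 - Y).
Definition Fx (KS KD b X Y : R) :=
  X `^ b * sF KS KD Y / (X `^ b * sF KS KD Y + (1 - X) `^ b * (KS + KD - sF KS KD Y)).

Lemma Fx_mono (KS KD b X1 X2 Y1 Y2 : R) : 0 < KD -> KD < KS -> 0 < b ->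
  0 < X1 -> X1 <= X2 -> X2 < 1 -> 0 <= Y1 -> Y1 <= Y2 -> Y2 <= 1 ->
  Fx KS KD b X1 Y1 <= Fx KS KD b X2 Y2.
Proof.
move=> KD0 KDS b0 X10 X12 X21 Y10 Y12 Y21.
rewrite /Fx /sF.
set s1 := KS * Y1 + KD * (1 - Y1); set s2 := KS * Y2 + KD * (1 - Y2).
have s10 : 0 < s1 by rewrite /s1; nra.
have s12 : s1 <= s2 by rewrite /s1 /s2; nra.
have e2 : 0 < KS + KD - s2 by rewrite /s2; nra.
have e12 : KS + KD - s2 <= KS + KD - s1 by lra.
have a1 : 0 < X1 `^ b by apply: powR_gt0.
have a12 : X1 `^ b <= X2 `^ b by apply: ge0_ler_powR; rewrite ?nnegrE; lra.
have c2 : 0 < (1 - X2) `^ b by apply: powR_gt0; lra.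
have c12 : (1 - X2) `^ b <= (1 - X1) `^ b by apply: ge0_ler_powR; rewrite ?nnegrE; lra.
set A1 := X1 `^ b in a1 a12 *; set A2 := X2 `^ b in a12 *.
set C1 := (1 - X1) `^ b in c12 *; set C2 := (1 - X2) `^ b in c2 c12 *.
set E1 := KS + KD - s1 in e12 *; set E2 := KS + KD - s2 in e2 e12 *.
have P1 : A1 * s1 <= A2 * s2 by apply: ler_pM; lra.
have P2 : C2 * E2 <= C1 * E1 by apply: ler_pM; lra.
have P3 : (A1 * s1) * (C2 * E2) <= (A2 * s2) * (C1 * E1).
  by apply: ler_pM => //; apply: mulr_ge0; lra.
have d1 : 0 < A1 * s1 + C1 * E1 by apply: addr_gt0; apply: mulr_gt0 => //; lra.
have d2 : 0 < A2 * s2 + C2 * E2 by apply: addr_gt0; apply: mulr_gt0 => //; lra.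
rewrite ler_pdivrMr // mulrAC ler_pdivlMr //.
lra.
Qed.

Lemma Fx_bnd (KS KD b X Y : R) : 0 < KD -> KD < KS -> 0 < X < 1 -> 0 <= Y <= 1 ->
  0 < Fx KS KD b X Y < 1.
Proof.
move=> KD0 KDS /andP[X0 X1] /andP[Y0 Y1].
rewrite /Fx /sF.
set s := KS * Y + KD * (1 - Y).
have s0 : 0 < s by rewrite /s; nra.
have e : 0 < KS + KD - s by rewrite /s; nra.
have a : 0 < X `^ b by apply: powR_gt0.
have c : 0 < (1 - X) `^ b by apply: powR_gt0; lra.
have p1 : 0 < X `^ b * s by apply: mulr_gt0.
have p2 : 0 < (1 - X) `^ b * (KS + KD - s) by apply: mulr_gt0.
apply/andP; split; first by apply: divr_gt0 => //; lra.
by rewrite ltr_pdivrMr; lra.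
Qed.

Lemma chain_le (u : nat -> R) N :
  (forall s, (N <= s)%N -> u s <= u s.+1) -> forall s t, (N <= s)%N -> (s <= t)%N -> u s <= u t.
Proof.
move=> H s t Ns st; rewrite -(subnKC st).
elim: (t - s)%N => [|m IH]; first by rewrite addn0.
rewrite addnS; apply: le_trans IH _; apply: H; apply: leq_trans Ns _; exact: leq_addr.
Qed.

Lemma mono_cvg (u : nat -> R) N : monotone_from u N -> (forall n, 0 <= u n <= 1) ->
  exists l : R, u @ \oo --> l.
Proof.
move=> hm hb.
suff : cvgn ((fun n => u (n + N)%N) : R ^nat).
  by case/cvg_ex => /= l; rewrite cvg_shiftn => ul; exists l.
case: hm => hm.
  apply: nondecreasing_is_cvgn.
    move=> m n mn /=; apply: hm; [exact: leq_addl|by rewrite leq_add2r].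
  by exists 1 => _ [n _ <-]; case/andP: (hb (n + N)%N).
apply: nonincreasing_is_cvgn.
  move=> m n mn /=; apply: hm; [exact: leq_addl|by rewrite leq_add2r].
by exists 0 => _ [n _ <-]; case/andP: (hb (n + N)%N).
Qed.


Lemma nbr_sum (T : finType) (e : rel T) (V1 : {set T}) (n : nat) (ps pd : R)
   (j : T) (f : T -> R) (al be : R) :
  two_island e V1 n ps pd ->
  (forall k, k \in V1 -> f k = al) -> (forall k, k \notin V1 -> f k = be) ->
  \sum_(k | e j k) w R e j k * f k =
    (if j \in V1 then n%:R * ps else n%:R * pd) * al +
    (if j \in V1 then n%:R * pd else n%:R * ps) * be.
Proof.
move=> [_ [_ [_ [_ [_ [_ [_ [_ [_ [_ hdeg]]]]]]]]]] f1 f2.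
have [d1 d2] := hdeg j.
rewrite (bigID (fun k => k \in V1)) /=.
have -> : \sum_(k | e j k && (k \in V1)) w R e j k * f k =
          \sum_(k in [set k in V1 | e j k]) al.
  apply: eq_big => k; first by rewrite inE andbC.
  by move=> /andP[ejk kV]; rewrite f1 // /w ejk /= mul1r.
have -> : \sum_(k | e j k && (k \notin V1)) w R e j k * f k =
          \sum_(k in [set k in ~: V1 | e j k]) be.
  apply: eq_big => k; first by rewrite !inE andbC.
  by move=> /andP[ejk kV]; rewrite f2 // /w ejk /= mul1r.
by rewrite !sumr_const -d1 -d2 !mulr_natl.
Qed.

Lemma chain_ge (u : nat -> R) N :
  (forall s, (N <= s)%N -> u s.+1 <= u s) -> forall s t, (N <= s)%N -> (s <= t)%N -> u t <= u s.
Proof.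
move=> H s t Ns st; rewrite -lerN2.
apply: (@chain_le (fun n => - u n) N) => // m Nm; rewrite lerN2; exact: H.
Qed.

Lemma deg_val (T : finType) (e : rel T) (V1 : {set T}) (n : nat) (ps pd : R) (j : T) :
  two_island e V1 n ps pd -> deg R e j = n%:R * ps + n%:R * pd.
Proof.
move=> H; rewrite /deg.
have -> : \sum_(k | e j k) w R e j k = \sum_(k | e j k) w R e j k * (fun=> 1) k.
  by apply: eq_bigr => k _; rewrite mulr1.
rewrite (@nbr_sum T e V1 n ps pd j (fun=> 1) 1 1 H) // !mulr1.
by case: (j \in V1) => //; rewrite addrC.
Qed.

End D.
Arguments Fx {R}. Arguments sF {R}.



Theorem lemmaB5 (R : realType) (T : finType) (e : rel T) (V1 : {set T})
    (n : nat) (ps pd phi b x0 y0 : R) (x y : nat -> T -> R) (i : T) :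
  two_island e V1 n ps pd ->
  0 < phi -> phi < 1 ->
  2 / (phi * (ps / pd - 1) + 2) < b -> b < 1 ->
  2^-1 < x0 -> x0 < 1 -> 2^-1 <= y0 -> y0 <= x0 ->
  (forall j, j \in V1 -> x 0%N j = x0 /\ y 0%N j = y0) ->
  (forall j, j \notin V1 -> x 0%N j = 1 - x0 /\ y 0%N j = 1 - y0) ->
  dual_dynamics e b phi x y ->
  i \in V1 ->
  forall T0 : nat, (0 < T0)%N ->
  (forall t, (T0 <= t)%N ->
     xhat phi (ps / pd) b <= x t i /\ x t i < xhat 1 (ps / pd) b) ->
  exists T1 : nat, (T0 < T1)%N /\
    monotone_from (fun t => x t i) T1 /\ monotone_from (fun t => y t i) T1 /\
    ((fun t => x t i) @ \oo --> (xhat phi (ps / pd) b : R)) /\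
    ((fun t => y t i) @ \oo --> (phi * (ps / pd + 1) * xhat phi (ps / pd) b + 1 - phi)
                                  / (phi * (ps / pd) + 2 - phi)).
Proof.
move=> HG phi0 phi1 hb b1 x0h x01 y0h y0x init1 init2 dyn iV T0 T00 band.
have HG' := HG.
case: HG' => [n1 [pd0 [pdps [ps1 _]]]].
set KS := n%:R * ps; set KD := n%:R * pd.
have n0 : 0 < n%:R :> R by rewrite ltr0n.
have KD0 : 0 < KD by apply: mulr_gt0.
have KDS : KD < KS by rewrite ltr_pM2l.
set h := ps / pd.
have hKS : KS = h * KD by rewrite /KS /KD /h; field; apply: lt0r_neq0.
have h1 : 1 < h by rewrite /h ltr_pdivlMr // mul1r.
set c0 := phi * (h - 1).
have c00 : 0 < c0 by apply: mulr_gt0 => //; lra.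
have hb2 : 2 / (c0 + 2) < b := hb.
have b0 : 0 < b by apply: (lt_trans _ hb2); apply: divr_gt0 => //; lra.
have rk : 1 - b < c0 / (c0 + 2).
  move: hb2; rewrite ltr_pdivrMr; last by lra.
  move=> hb'; rewrite ltr_pdivlMr; nra.
have Hdeg : forall j, deg R e j = KS + KD by move=> j; exact: (@deg_val R T e V1 n ps pd j HG).
set X := fun t => x t i; set Y := fun t => y t i.
set d := KS + KD.
have d0 : 0 < d by rewrite /d; lra.
have Sym : forall t, (forall j, j \in V1 -> x t j = X t /\ y t j = Y t) /\
    (forall j, j \notin V1 -> x t j = 1 - X t /\ y t j = 1 - Y t) /\
    0 < X t < 1 /\ 0 < Y t < 1.
  elim=> [|t [S1 [S2 [hX hY]]]].
    have [ix iy] := init1 i iV.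
    rewrite /X /Y ix iy; split; first exact: init1.
    split; first exact: init2.
    split; apply/andP; split; lra.
  have sums : forall j, \sum_(k | e j k) w R e j k * y t k =
      (if j \in V1 then KS else KD) * Y t + (if j \in V1 then KD else KS) * (1 - Y t).
    move=> j; apply: (@nbr_sum R T e V1 n ps pd j (y t) (Y t) (1 - Y t) HG) => k kV.
      exact: (S1 k kV).2.
    exact: (S2 k kV).2.
  have avg : forall j, \sum_(k | e j k) (w R e j k / deg R e j) * y t k =
      (\sum_(k | e j k) w R e j k * y t k) / d.
    by move=> j; rewrite mulr_suml Hdeg; apply: eq_bigr => k _; rewrite mulrAC.
  set F := Fx KS KD b (X t) (Y t).
  set Yb := phi * F + (1 - phi) * (sF KS KD (Y t) / d).
  have sF0 : 0 < sF KS KD (Y t) by rewrite /sF; case/andP: hY => ? ?; nra.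
  have sF1 : sF KS KD (Y t) < d by rewrite /sF /d; case/andP: hY => ? ?; nra.
  have E1 : forall j, j \in V1 -> x t.+1 j = F /\ y t.+1 j = Yb.
    move=> j jV; have [Ex Ey] := dyn t j.
    rewrite Ex in Ey; rewrite Ey Ex avg sums (S1 j jV).1 jV Hdeg.
    by split.
  have E2 : forall j, j \notin V1 -> x t.+1 j = 1 - F /\ y t.+1 j = 1 - Yb.
    move=> j jV; have [Ex Ey] := dyn t j.
    rewrite Ex in Ey; rewrite Ey Ex avg sums (S2 j jV).1 (negbTE jV) Hdeg.
    rewrite -/d.
    have -> : KD * Y t + KS * (1 - Y t) = d - sF KS KD (Y t) by rewrite /sF /d; ring.
    have -> : d - (d - sF KS KD (Y t)) = sF KS KD (Y t) by ring.
    have -> : 1 - (1 - X t) = X t by ring.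
    case/andP: hX => X0 X1.
    have A0 : 0 < X t `^ b by apply: powR_gt0.
    have B0 : 0 < (1 - X t) `^ b by apply: powR_gt0; lra.
    have P1 : 0 < X t `^ b * sF KS KD (Y t) by apply: mulr_gt0.
    have P2 : 0 < (1 - X t) `^ b * (d - sF KS KD (Y t)) by apply: mulr_gt0; lra.
    rewrite /Yb /F /Fx -/d.
    split; field; lra.
  have [EX EY] := E1 i iV.
  have HF : 0 < F < 1 by apply: Fx_bnd => //; case/andP: hY => ? ?; apply/andP; split; lra.
  have Hs : 0 < sF KS KD (Y t) / d < 1.
    by apply/andP; split; [apply: divr_gt0|rewrite ltr_pdivrMr // mul1r].
  split; first by move=> j jV; rewrite /X /Y EX EY; exact: E1.
  split; first by move=> j jV; rewrite /X /Y EX EY; exact: E2.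
  rewrite /X /Y EX EY; split; first exact: HF.
  rewrite /Yb; case/andP: HF => ? ?; case/andP: Hs => ? ?; apply/andP; split; nra.
have RXY : forall t, X t.+1 = Fx KS KD b (X t) (Y t) /\
    Y t.+1 = phi * X t.+1 + (1 - phi) * (sF KS KD (Y t) / d).
  move=> t; have [S1 [S2 _]] := Sym t.
  have sums : \sum_(k | e i k) w R e i k * y t k = KS * Y t + KD * (1 - Y t).
    rewrite (@nbr_sum R T e V1 n ps pd i (y t) (Y t) (1 - Y t) HG) ?iV // => k kV.
      exact: (S1 k kV).2.
    exact: (S2 k kV).2.
  have avg : \sum_(k | e i k) (w R e i k / deg R e i) * y t k =
      (\sum_(k | e i k) w R e i k * y t k) / d.
    by rewrite mulr_suml Hdeg; apply: eq_bigr => k _; rewrite mulrAC.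
  have [Ex Ey] := dyn t i.
  rewrite /X /Y Ey Ex avg sums Hdeg.
  by split.
have Xb : forall t, 0 < X t < 1 by move=> t; case: (Sym t) => _ [_ []].
have Yb : forall t, 0 < Y t < 1 by move=> t; case: (Sym t) => _ [_ []].
set cq := (1 - phi) * (KS - KD) / d.
have cq0 : 0 < cq by rewrite /cq; apply: divr_gt0 => //; apply: mulr_gt0; lra.
have Ydiff : forall t, Y t.+2 - Y t.+1 = phi * (X t.+2 - X t.+1) + cq * (Y t.+1 - Y t).
  move=> t; rewrite [Y t.+2](proj2 (RXY t.+1)) [Y t.+1](proj2 (RXY t)) /cq /sF.
  by field; lra.
pose p := fun t => X t.+2 - X t.+1.
pose q := fun t => Y t.+1 - Y t.
have Rup : forall t, 0 <= p t -> 0 <= q t.+1 -> 0 <= p t.+1.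
  move=> t; rewrite /p /q !subr_ge0 => pt qt.
  have := Xb t.+1; have := Xb t.+2; have := Yb t.+1; have := Yb t.+2.
  move=> /andP[? ?] /andP[? ?] /andP[? ?] /andP[? ?].
  have key : Fx KS KD b (X t.+1) (Y t.+1) <= Fx KS KD b (X t.+2) (Y t.+2).
    by apply: Fx_mono => //; lra.
  by rewrite -(proj1 (RXY t.+1)) -(proj1 (RXY t.+2)) in key.
have Rdn : forall t, p t <= 0 -> q t.+1 <= 0 -> p t.+1 <= 0.
  move=> t; rewrite /p /q !subr_le0 => pt qt.
  have := Xb t.+1; have := Xb t.+2; have := Yb t.+1; have := Yb t.+2.
  move=> /andP[? ?] /andP[? ?] /andP[? ?] /andP[? ?].
  have key : Fx KS KD b (X t.+2) (Y t.+2) <= Fx KS KD b (X t.+1) (Y t.+1).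
    by apply: Fx_mono => //; lra.
  by rewrite -(proj1 (RXY t.+1)) -(proj1 (RXY t.+2)) in key.
have Qup : forall t, 0 <= p t -> 0 <= q t -> 0 <= q t.+1.
  move=> t; rewrite /p /q => pt qt; rewrite Ydiff.
  by apply: addr_ge0; apply: mulr_ge0 => //; lra.
have Qdn : forall t, p t <= 0 -> q t <= 0 -> q t.+1 <= 0.
  move=> t; rewrite /p /q => pt qt; rewrite Ydiff.
  have : 0 <= phi * - (X t.+2 - X t.+1) by apply: mulr_ge0; lra.
  have : 0 <= cq * - (Y t.+1 - Y t) by apply: mulr_ge0; lra.
  lra.
have [TT [HP HQ]] := @eventually_mono R p q Rup Qup Rdn Qdn.
set T1 := (TT + T0).+2.
have TT1 : (TT.+1 <= T1)%N by rewrite /T1 ltnS ltnW // ltnS leq_addr.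
have monoX : monotone_from (fun t => x t i) T1.
  case: HP => HP; [left|right] => s t Ts st.
  - apply: (@chain_le R X TT.+1) => //; last exact: leq_trans TT1 Ts.
    by case=> [//|k] Hk; have := HP k Hk; rewrite /p subr_ge0.
  - apply: (@chain_ge R X TT.+1) => //; last exact: leq_trans TT1 Ts.
    by case=> [//|k] Hk; have := HP k Hk; rewrite /p subr_le0.
have monoY : monotone_from (fun t => y t i) T1.
  case: HQ => HQ; [left|right] => s t Ts st.
  - apply: (@chain_le R Y TT) => //; last exact: leq_trans (ltnW TT1) Ts.
    by move=> k Hk; have := HQ k Hk; rewrite /q subr_ge0.
  - apply: (@chain_ge R Y TT) => //; last exact: leq_trans (ltnW TT1) Ts.
    by move=> k Hk; have := HQ k Hk; rewrite /q subr_le0.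
have [LX hLX] : exists LX : R, X @ \oo --> LX.
  apply: (@mono_cvg R X T1 monoX) => t; have := Xb t; move=> /andP[? ?]; apply/andP; split; lra.
have [LY hLY] : exists LY : R, Y @ \oo --> LY.
  apply: (@mono_cvg R Y T1 monoY) => t; have := Yb t; move=> /andP[? ?]; apply/andP; split; lra.
exists T1; split; first by rewrite /T1 ltnS ltnW // ltnS leq_addl.
split; first exact: monoX.
split; first exact: monoY.
set k := c0 / (c0 + 2).
have k0 : 0 < k by rewrite /k divr_gt0 //; lra.
have k1 : k < 1 by rewrite /k ltr_pdivrMr; lra.
have hk : 0 < k < 1 by rewrite k0 k1.
have r0 : 0 < 1 - b by lra.
have hb01 : 0 < b < 1 by rewrite b0 b1.
set P := [set z : R | 2^-1 < z < 1 /\ g z b = phi * (h - 1)].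
have uniq : forall u v, P u -> P v -> u = v.
  move=> u v [hu gu] [hv gv].
  apply: (@psi_unique R (1 - b) k u v r0 rk k1 hu hv).
    by apply/(@g_psi R u b c0 hb01 c00 hu).
  by apply/(@g_psi R v b c0 hb01 c00 hv).
have Pa : P (xhat phi h b).
  have [z [hz pz]] := @psi_exists R (1 - b) k r0 rk k1.
  apply: (@xgetPex _ (2^-1) P); exists z; split => //.
  by apply/(@g_psi R z b c0 hb01 c00 hz).
set a := xhat phi h b in Pa *.
have ca : xhat 1 h b < 1.
  rewrite /xhat; set P1 := [set z : R | 2^-1 < z < 1 /\ g z b = 1 * (h - 1)].
  case: (pselect (exists z, P1 z)) => [ex|nex].
    by have [/andP[_ ->] _] := @xgetPex _ (2^-1) P1 ex.
  rewrite xgetPN; first lra.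
  by move=> z Pz; apply: nex; exists z.
set c := xhat 1 h b in ca band *.
have aLX : a <= LX.
  apply: (ler_cvg_to (cvg_cst a) hLX).
  by exists T0 => // t /= Tt; case: (band t Tt).
have LXc : LX <= c.
  apply: (ler_cvg_to hLX (cvg_cst c)).
  by exists T0 => // t /= Tt; case: (band t Tt) => _ /ltW.
have [/andP[ah a1] _] := Pa.
have LX0 : 0 < LX by lra.
have LX1 : LX < 1 by lra.
have hX1 : (fun t => X t.+1) @ \oo --> LX.
  have E : (fun t => X t.+1) = (fun t => X (t + 1)%N) by apply/funext => t; rewrite addn1.
  by rewrite E (cvg_shiftn 1 X).
have hY1 : (fun t => Y t.+1) @ \oo --> LY.
  have E : (fun t => Y t.+1) = (fun t => Y (t + 1)%N) by apply/funext => t; rewrite addn1.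
  by rewrite E (cvg_shiftn 1 Y).
have cont_pow : forall z : R, 0 < z -> {for z, continuous (fun u : R => u `^ b)}.
  move=> z z0; apply/differentiable_continuous/derivable1_diffP/derivable_powR.
  by rewrite in_itv /= andbT.
have hPX : (fun t => X t `^ b) @ \oo --> LX `^ b.
  exact: (continuous_cvg _ (cont_pow LX LX0) hLX).
have h1X : (fun t => 1 - X t) @ \oo --> 1 - LX.
  by apply: cvgB => //; exact: cvg_cst.
have hPX' : (fun t => (1 - X t) `^ b) @ \oo --> (1 - LX) `^ b.
  have LX1' : 0 < 1 - LX by lra.
  exact: (continuous_cvg _ (cont_pow (1 - LX) LX1') h1X).
have hS : (fun t => sF KS KD (Y t)) @ \oo --> sF KS KD LY.
  rewrite /sF; apply: cvgD; apply: cvgM; try exact: cvg_cst; try exact: hLY.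
  by apply: cvgB => //; exact: cvg_cst.
have E1 : (fun t => X t.+1 * (X t `^ b * sF KS KD (Y t) + (1 - X t) `^ b * (d - sF KS KD (Y t))))
         = (fun t => X t `^ b * sF KS KD (Y t)).
  apply/funext => t; rewrite (proj1 (RXY t)) /Fx -/d.
  have := Xb t; have := Yb t; move=> /andP[Y0 Y1] /andP[X0 X1].
  have sF0 : 0 < sF KS KD (Y t) by rewrite /sF; nra.
  have sF1 : sF KS KD (Y t) < d by rewrite /sF /d; nra.
  have A0 : 0 < X t `^ b by apply: powR_gt0.
  have B0 : 0 < (1 - X t) `^ b by apply: powR_gt0; lra.
  have : 0 < X t `^ b * sF KS KD (Y t) + (1 - X t) `^ b * (d - sF KS KD (Y t)).
    by apply: addr_gt0; apply: mulr_gt0 => //; lra.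
  move=> /lt0r_neq0 H; by rewrite divfK.
have hL : (fun t => X t.+1 * (X t `^ b * sF KS KD (Y t) + (1 - X t) `^ b * (d - sF KS KD (Y t))))
     @ \oo --> LX * (LX `^ b * sF KS KD LY + (1 - LX) `^ b * (d - sF KS KD LY)).
  apply: cvgM => //; apply: cvgD; apply: cvgM => //.
  by apply: cvgB => //; exact: cvg_cst.
have hR : (fun t => X t `^ b * sF KS KD (Y t)) @ \oo --> LX `^ b * sF KS KD LY.
  by apply: cvgM.
have EL : LX * (LX `^ b * sF KS KD LY + (1 - LX) `^ b * (d - sF KS KD LY)) = LX `^ b * sF KS KD LY.
  rewrite E1 in hL; exact: (@cvg_unique _ (@Rhausdorff R) _ _ _ _ hL hR).
have EY : (fun t => Y t.+1) = (fun t => phi * X t.+1 + (1 - phi) * (sF KS KD (Y t) / d)).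
  by apply/funext => t; rewrite (proj2 (RXY t)).
have hY' : (fun t => phi * X t.+1 + (1 - phi) * (sF KS KD (Y t) / d)) @ \oo -->
     phi * LX + (1 - phi) * (sF KS KD LY / d).
  apply: cvgD.
    by apply: cvgM; [exact: cvg_cst|exact: hX1].
  apply: cvgM; first exact: cvg_cst.
  by apply: cvgM; [exact: hS|exact: cvg_cst].
have ELY : LY = phi * LX + (1 - phi) * (sF KS KD LY / d).
  rewrite EY in hY1; exact: (@cvg_unique _ (@Rhausdorff R) _ _ _ _ hY1 hY').
have LY0 : 0 <= LY.
  apply: (ler_cvg_to (cvg_cst (0:R)) hLY).
  by exists 0%N => // t /= _; case/andP: (Yb t) => /ltW.
have LY1 : LY <= 1.
  apply: (ler_cvg_to hLY (cvg_cst (1:R))).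
  by exists 0%N => // t /= _; case/andP: (Yb t) => _ /ltW.
set s := sF KS KD LY in EL ELY.
have s0 : 0 < s by rewrite /s /sF; nra.
have sd : s < d by rewrite /s /sF /d; nra.
set A := LX `^ (1 - b); set B := (1 - LX) `^ (1 - b).
set A' := LX `^ b; set B' := (1 - LX) `^ b.
have A0 : 0 < A by apply: powR_gt0.
have B0 : 0 < B by apply: powR_gt0; lra.
have A'0 : 0 < A' by apply: powR_gt0.
have B'0 : 0 < B' by apply: powR_gt0; lra.
have hA : A' * A = LX.
  rewrite /A /A' -powRD; last by apply/implyP => _; apply: lt0r_neq0.
  by rewrite (_ : b + (1 - b) = 1); [rewrite powRr1 // ltW|ring].
have hB : B' * B = 1 - LX.
  rewrite /B /B' -powRD; last by apply/implyP => _; apply: lt0r_neq0; lra.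
  by rewrite (_ : b + (1 - b) = 1); [rewrite powRr1 // subr_ge0 ltW|ring].
have e1 : LX * B' * (d - s) = (1 - LX) * A' * s.
  apply/eqP; rewrite -subr_eq0; apply/eqP.
  transitivity (LX * (A' * s + B' * (d - s)) - A' * s); first by ring.
  by rewrite EL subrr.
have e3 : A * (d - s) = B * s.
  rewrite -hB -hA in e1.
  have : A' * B' * (A * (d - s) - B * s) = 0.
    transitivity (A' * A * B' * (d - s) - B' * B * A' * s); first by ring.
    by rewrite e1 subrr.
  move/eqP; rewrite mulf_eq0 (negbTE (lt0r_neq0 (mulr_gt0 A'0 B'0))) /= subr_eq0.
  by move/eqP.
have hsig : s / d = sig_ k LX.
  have Hs : s = KD * (h * LY + 1 - LY) by rewrite /s /sF hKS; ring.
  have Hd : d = KD * (h + 1) by rewrite /d hKS; ring.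
  have H1 : (s / d) * (h + 1) = h * LY + 1 - LY.
    by rewrite Hs Hd; field; apply/andP; split; apply: lt0r_neq0; lra.
  have H2 : (s / d) * (c0 + 2) = c0 * LX + 1.
    rewrite -/(s / d) in ELY.
    move: H1; rewrite {1}ELY /c0 => H1.
    set z := s / d in H1 ELY *.
    nra.
  rewrite /sig_ /k.
  apply: (mulIf (x := c0 + 2)); first by apply: lt0r_neq0; lra.
  rewrite H2; field; apply: lt0r_neq0; lra.
have hLXr : 2^-1 < LX < 1 by rewrite LX1 andbT; lra.
have psi0 : psi (1 - b) k LX = 0.
  apply/(@psi_AB R (1 - b) k LX hk); first by rewrite LX0 LX1.
  rewrite -hsig -/A -/B.
  have -> : A * (1 - s / d) = (A * (d - s)) / d by field; apply: lt0r_neq0.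
  by rewrite e3; field; apply: lt0r_neq0.
have gLX : g LX b = c0 by apply/(@g_psi R LX b c0 hb01 c00 hLXr).
have LXa : LX = a by apply: uniq => //; split.
split; first by rewrite -LXa.
have -> : (phi * (h + 1) * a + 1 - phi) / (phi * h + 2 - phi) = LY.
  rewrite -LXa ELY -/(s / d) hsig /sig_ /k /c0.
  field; apply/eqP => H; have : 0 < phi * (h - 1) by apply: mulr_gt0; lra.
  lra.
exact: hLY.






Qed.
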